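(* Let $M>0$. There exist a real Banach space $(X,\|\cdot\|)$ that is linearly isomorphic to $\ell_1$ and an approximately convex set $A\subseteq B_M(X)$ such that $$\mathcal{H}(A,\operatorname{Co}(A))=\operatorname{diam}(A)=2M.$$
   Context: $B_M(X)=\{x\in X:\|x\|\le M\}$. A set $A$ is approximately convex if $d(tx+(1-t)y,A)\le1$ for all $x,y\in A$, $t\in[0,1]$, where $d(x,A)=\inf_{a\in A}\|x-a\|$. $\mathcal{H}$ is the Hausdorff distance, $\operatorname{Co}$ the convex hull, $\operatorname{diam}(A)=\sup\{\|x-y\|:x,y\in A\}$. *)

(* Defs.v *)
From HB Require Import structures.
From mathcomp Require Import all_boot all_order all_algebra.
From mathcomp Require Import all_classical all_reals all_analysis.
Set Implicit Arguments. Unset Strict Implicit. Unset Printing Implicit Defensive.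
Import Order.TTheory GRing.Theory Num.Theory.
Import numFieldNormedType.Exports.
Local Open Scope classical_set_scope.
Local Open Scope ring_scope.

Section Defs.
Variables (R : realType) (X : normedModType R).

Definition ballM (M : R) : set X := [set x | `|x| <= M].

(* d(x,A) = inf_{a in A} ||x - a||  (extended real, +oo if A empty) *)
Definition dist_set (x : X) (A : set X) : \bar R :=
  ereal_inf [set (`|x - a|)%:E | a in A].

Definition diam (A : set X) : \bar R :=
  ereal_sup [set (`|x - y|)%:E | x in A & y in A].

Definition hausdorff (A B : set X) : \bar R :=
  Order.max (ereal_sup [set dist_set a B | a in A])
            (ereal_sup [set dist_set b A | b in B]).

Definition conv_hull (A : set X) : set X :=
  [set x | exists (n : nat) (l : 'I_n -> R) (a : 'I_n -> X),
     (forall i, 0 <= l i) /\ \sum_(i < n) l i = 1 /\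
     (forall i, A (a i)) /\ x = \sum_(i < n) l i *: a i].

Definition approx_convex (A : set X) : Prop :=
  forall x y (t : R), A x -> A y -> 0 <= t <= 1 ->
    (dist_set (t *: x + (1 - t) *: y)%R A <= 1%:E)%E.

End Defs.

(* l1 norm of a real sequence (extended real, +oo if not summable) *)
Definition l1norm (R : realType) (u : nat -> R) : \bar R :=
  (\sum_(0 <= k <oo) (`|u k|)%:E)%E.

(* X is linearly (topologically) isomorphic to l_1: there is a linear bijection
   T : X -> l_1 which is bounded with bounded inverse. *)
Definition iso_to_l1 (R : realType) (X : normedModType R) : Prop :=
  exists (T : X -> nat -> R),
    (forall x y, T (x + y) = (fun n => T x n + T y n)) /\
    (forall (a : R) x, T (a *: x) = (fun n => a * T x n)) /\
    (exists c C : R, 0 < c /\ 0 < C /\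
       forall x, ((c * `|x|)%:E <= l1norm (T x))%E /\ (l1norm (T x) <= (C * `|x|)%:E)%E) /\
    (forall u : nat -> R, (l1norm u < +oo)%E -> exists x, T x = u).

(* Main.v *)
Require Import Defs.
From HB Require Import structures.
From mathcomp Require Import all_boot all_order all_algebra.
From mathcomp Require Import all_classical all_reals all_analysis.
From mathcomp Require Import ring lra.
Import Order.TTheory GRing.Theory Num.Theory.
Import numFieldNormedType.Exports.
Local Open Scope classical_set_scope.
Local Open Scope ring_scope.

Section L1basic.
Context {R : realType}.
Implicit Types u v : nat -> R.

Lemma l1norm_ge0 u : (0 <= l1norm u)%E.
Proof. by apply: nneseries_ge0 => n _ _; rewrite lee_fin. Qed.

Lemma l1norm_psum u n : ((\sum_(k < n) `|u k|)%:E <= l1norm u)%E.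
Proof.
have := @nneseries_lim_ge R (fun k => (`|u k|)%:E) xpredT 0 n.
rewrite big_mkord sumEFin; apply => k _ _; rewrite lee_fin.
exact: normr_ge0.
Qed.

Lemma l1norm_D u v : (l1norm (u + v)%R <= l1norm u + l1norm v)%E.
Proof.
rewrite /l1norm -nneseriesD; last 2 first.
  by move=> k _ _; rewrite lee_fin.
  by move=> k _ _; rewrite lee_fin.
apply: lee_nneseries => [k _ _|k _]; first by rewrite lee_fin.
by rewrite -EFinD lee_fin; apply: ler_normD.
Qed.

Lemma l1norm_Z (a : R) u : l1norm (a *: u)%R = ((`|a|)%:E * l1norm u)%E.
Proof.
rewrite /l1norm -nneseriesZl; last by move=> k _; rewrite lee_fin.
apply: eq_eseriesr => k _.
by rewrite -EFinM /GRing.scale /= normrM.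
Qed.

Lemma l1norm0 : l1norm (0 : nat -> R) = 0%E.
Proof.
rewrite /l1norm (eq_eseriesr (g := fun=> 0%E)); last by move=> k _; rewrite normr0.
by rewrite eseries0.
Qed.

Lemma l1norm_coord u k : ((`|u k|)%:E <= l1norm u)%E.
Proof.
apply: le_trans (l1norm_psum u k.+1).
rewrite lee_fin big_ord_recr /= lerDr; exact: sumr_ge0.
Qed.

Lemma l1norm_eq0 u : l1norm u = 0%E -> u = 0.
Proof.
move=> h; apply/funext => k; have := l1norm_coord u k; rewrite h lee_fin.
by move=> hk; apply/normr0_eq0/le_anti; rewrite hk normr_ge0.
Qed.

End L1basic.

Section L1type.
Variable R : realType.

Definition l1pred : {pred nat -> R} := fun u => (l1norm u < +oo)%E.

Record l1 := L1 { l1val : nat -> R; l1P : l1pred l1val }.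

HB.instance Definition _ := [isSub for l1val].
HB.instance Definition _ := [Choice of l1 by <:].

Lemma l1pred_submod : subsemimod_closed l1pred.
Proof.
split; first split.
- by rewrite /in_mem /= /l1pred l1norm0 ltry.
- move=> u v; rewrite /in_mem /= /l1pred => hu hv.
  rewrite /in_mem /=. exact: (le_lt_trans (l1norm_D u v) (lte_add_pinfty hu hv)).
- move=> a u; rewrite /in_mem /= /l1pred => hu.
  rewrite /in_mem /= l1norm_Z; apply: lte_mul_pinfty => //; exact: l1norm_ge0.
Qed.

HB.instance Definition _ := GRing.isSubmodClosed.Build R (nat -> R) l1pred l1pred_submod.
HB.instance Definition _ := [SubChoice_isSubZmodule of l1 by <:].
HB.instance Definition _ := [SubZmodule_isSubLmodule of l1 by <:].

Definition l1nrm (x : l1) : R := fine (l1norm (l1val x)).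

Lemma l1normE (x : l1) : l1norm (l1val x) = (l1nrm x)%:E.
Proof.
rewrite /l1nrm fineK //; rewrite ge0_fin_numE ?l1norm_ge0 //; exact: l1P.
Qed.

Lemma l1nrm_D (x y : l1) : l1nrm (x + y) <= l1nrm x + l1nrm y.
Proof.
rewrite -lee_fin EFinD -!l1normE.
have -> : l1val (x + y) = (l1val x + l1val y)%R by [].
exact: l1norm_D.
Qed.

Lemma l1nrm_Z (a : R) (x : l1) : l1nrm (a *: x) = `|a| * l1nrm x.
Proof. by apply: EFin_inj; rewrite -l1normE EFinM -l1normE l1norm_Z. Qed.

Lemma l1nrm_eq0 (x : l1) : l1nrm x = 0 -> x = 0.
Proof.
move=> h; apply: val_inj; apply: l1norm_eq0; by rewrite l1normE h.
Qed.

HB.instance Definition _ := Lmodule_isNormed.Build R l1 l1nrm_D l1nrm_Z l1nrm_eq0.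


End L1type.
Arguments l1nrm {R}.
Arguments l1normE {R}.
Arguments l1val {R}.
Arguments l1P {R}.
Arguments L1 {R}.
Arguments l1pred {R}.

Section L1complete.
Variable R : realType.
Local Notation X := (l1 R).

Lemma normX (x : X) : `|x| = l1nrm x.
Proof. by []. Qed.

Lemma psum_le_norm (x : X) n : \sum_(k < n) `|l1val x k| <= `|x|.
Proof. by rewrite normX -lee_fin -l1normE; apply: l1norm_psum. Qed.

Lemma l1norm_le_psum (v : nat -> R) (r : R) :
  (forall n, \sum_(k < n) `|v k| <= r) -> (l1norm v <= r%:E)%E.
Proof.
move=> h; rewrite /l1norm.
apply: lime_le; first by apply: is_cvg_nneseries => k _ _; rewrite lee_fin.
apply: nearW => n; rewrite sumEFin lee_fin big_mkord; exact: h.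
Qed.

Lemma l1norm_N (v : nat -> R) : l1norm (- v)%R = l1norm v.
Proof.
have -> : (- v = (-1) *: v)%R by rewrite scaleN1r.
by rewrite l1norm_Z normrN normr1 mul1e.
Qed.

Lemma cvg_bigsum (F : set_system X) (FF : Filter F) (g : nat -> X -> R)
   (a : nat -> R) n :
  (forall k, g k @ F --> a k) ->
  (fun y => \sum_(k < n) g k y) @ F --> \sum_(k < n) a k.
Proof.
move=> hg; elim: n => [|n IH].
  rewrite big_ord0; under eq_fun do rewrite big_ord0; exact: cvg_cst.
rewrite big_ord_recr /=; under eq_fun do rewrite big_ord_recr /=.
exact: cvgD.
Qed.

Lemma l1_complete (F : set_system X) : ProperFilter F -> cauchy F -> cvg F.
Proof.
move=> FF /cauchyP Fc.
have cvk : forall k, cvg ((fun y : X => l1val y k) @ F).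
  move=> k; apply/cauchy_cvgP; apply: cauchy_exP => e e0.
  have [x0 Fx0] := Fc e e0; exists (l1val x0 k).
  change (F [set y : X | ball (l1val x0 k) e (l1val y k)]).
  apply: filterS Fx0 => y; rewrite /ball /= => hy.
  rewrite /ball /=; apply: le_lt_trans hy.
  have := psum_le_norm (x0 - y) k.+1; rewrite big_ord_recr /=.
  apply: le_trans; rewrite lerDr; exact: sumr_ge0.
pose u k := lim ((fun y : X => l1val y k) @ F).
have hu : forall k, (fun y : X => l1val y k) @ F --> u k by move=> k; exact: cvk.
have key : forall e, 0 < e -> exists x0 : X, F (ball x0 e) /\
    (l1norm (l1val x0 - u)%R <= e%:E)%E.
  move=> e e0; have [x0 Fx0] := Fc e e0; exists x0; split => //.
  apply: l1norm_le_psum => n.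
  have hl : (fun y : X => \sum_(k < n) `|l1val x0 k - l1val y k|) @ F -->
      \sum_(k < n) `|l1val x0 k - u k|.
    apply: (@cvg_bigsum F _ (fun k (y : X) => `|l1val x0 k - l1val y k|)
       (fun k => `|l1val x0 k - u k|)) => k.
    apply: cvg_norm; apply: cvgB => //; exact: cvg_cst.
  have hev : \forall y \near F, [set r | r <= e] (\sum_(k < n) `|l1val x0 k - l1val y k|).
    apply: filterS Fx0 => y; rewrite /ball /= => hy.
    apply/ltW; apply: le_lt_trans hy; exact: psum_le_norm (x0 - y) n.
  exact: (closed_cvg _ (@closed_le _ e) hev _ hl).
have [x1 [_ hx1]] := key 1 ltr01.
have uP : l1pred u.
  rewrite /l1pred.
  have -> : u = (l1val x1 - (l1val x1 - u))%R by rewrite subKr.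
  apply: le_lt_trans (l1norm_D _ _) _; rewrite l1norm_N.
  apply: lte_add_pinfty; first exact: l1P.
  by apply: le_lt_trans hx1 _; rewrite ltry.
apply/cvg_ex; exists (L1 u uP); apply/fcvgrPdist_lt => e e0.
have e30 : 0 < e / 3 by rewrite divr_gt0.
have [x0 [Fx0 hx0]] := key _ e30.
apply: filterS Fx0 => y; rewrite /ball /= => hy.
rewrite -(subrK x0 (L1 u uP)) -addrA.
apply: le_lt_trans (ler_normD _ _) _.
have h1 : `|L1 u uP - x0| <= e / 3.
  rewrite normX -lee_fin -l1normE.
  have -> : l1val (L1 u uP - x0) = (- (l1val x0 - u))%R.
    by rewrite opprB.
  by rewrite l1norm_N.
have -> : e = e / 3 + (e / 3 + e / 3) by lra.
apply: ler_ltD => //.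
apply: lt_le_trans hy _; rewrite lerDr; exact: ltW.
Qed.

HB.instance Definition _ := Uniform_isComplete.Build X l1_complete.
Check (X : completeNormedModType R).
End L1complete.
Arguments normX {R}.
Arguments psum_le_norm {R}.
Arguments l1norm_le_psum {R}.
Arguments l1norm_N {R}.

Section Geo1.
Variable R : realType.
Local Notation X := (l1 R).

Lemma sum_le_widen (f : nat -> R) n m : (forall k, 0 <= f k) -> (n <= m)%N ->
  \sum_(k < n) f k <= \sum_(k < m) f k.
Proof.
move=> f0 /subnKC <-; elim: (m - n)%N => [|d IH]; first by rewrite addn0.
by rewrite addnS big_ord_recr /= ler_wpDr.
Qed.

Lemma sum_zero_widen (f : nat -> R) n m : (forall k, (n <= k)%N -> f k = 0) ->
  (n <= m)%N -> \sum_(k < m) f k = \sum_(k < n) f k.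
Proof.
move=> f0 /subnKC <-; elim: (m - n)%N => [|d IH]; first by rewrite addn0.
by rewrite addnS big_ord_recr /= IH f0 ?addr0 // leq_addr.
Qed.

Lemma psum_fin_le (v : nat -> R) K n : (forall k, (K <= k)%N -> v k = 0) ->
  \sum_(k < n) `|v k| <= \sum_(k < K) `|v k|.
Proof.
move=> h.
have g0 : forall k, 0 <= `|v k| by move=> k; exact: normr_ge0.
have [nK|Kn] := leqP n K; first exact: (@sum_le_widen (fun k => `|v k|) n K g0 nK).
have hz : forall k, (K <= k)%N -> `|v k| = 0 by move=> k /h ->; rewrite normr0.
by rewrite (@sum_zero_widen (fun k => `|v k|) K n hz (ltnW Kn)).
Qed.

Lemma l1pred_fin (v : nat -> R) K : (forall k, (K <= k)%N -> v k = 0) -> l1pred v.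
Proof.
move=> h; rewrite /l1pred.
apply: (@le_lt_trans _ _ (\sum_(k < K) `|v k|)%:E); last by rewrite ltry.
apply: l1norm_le_psum => n; exact: psum_fin_le.
Qed.

Lemma norm_fin (x : X) K : (forall k, (K <= k)%N -> l1val x k = 0) ->
  `|x| = \sum_(k < K) `|l1val x k|.
Proof.
move=> h; apply/le_anti/andP; split; last exact: psum_le_norm.
rewrite normX -lee_fin -l1normE; apply: l1norm_le_psum => n.
exact: psum_fin_le.
Qed.

Lemma l1valD (x y : X) k : l1val (x + y) k = l1val x k + l1val y k.
Proof. by []. Qed.
Lemma l1valB (x y : X) k : l1val (x - y) k = l1val x k - l1val y k.
Proof. by []. Qed.
Lemma l1valZ (a : R) (x : X) k : l1val (a *: x) k = a * l1val x k.
Proof. by []. Qed.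
Lemma l1val_sum n (f : 'I_n -> X) k :
  l1val (\sum_(i < n) f i) k = \sum_(i < n) l1val (f i) k.
Proof.
elim: n f => [|n IH] f; first by rewrite !big_ord0.
by rewrite big_ord_recr [RHS]big_ord_recr /= -IH.
Qed.

End Geo1.
Arguments sum_le_widen {R}.
Arguments sum_zero_widen {R}.
Arguments psum_fin_le {R}.
Arguments l1pred_fin {R}.
Arguments norm_fin {R}.
Arguments l1valD {R}.
Arguments l1valB {R}.
Arguments l1valZ {R}.
Arguments l1val_sum {R}.

Section Geo2.
Variable R : realType.
Local Notation X := (l1 R).
Variables (M : R) (hM : 0 < M).

Definition q : R := if 2 * M <= 1 then 0 else 1 - (2 * M)^-1.

Lemma M2_gt0 : 0 < 2 * M.
Proof. by rewrite mulr_gt0. Qed.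

Lemma q_ge0 : 0 <= q.
Proof.
rewrite /q; case: ifP => // /negbT; rewrite -ltNge => h.
by rewrite subr_ge0 invf_le1 ?M2_gt0 // ltW.
Qed.

Lemma q_le1 : q <= 1.
Proof.
rewrite /q; case: ifP => _; first exact: ler01.
by rewrite lerBlDr lerDl invr_ge0 ltW // M2_gt0.
Qed.

Lemma q_cost : (1 - q) * (2 * M) <= 1.
Proof.
rewrite /q; case: ifP => h; first by rewrite subr0 mul1r.
by rewrite opprB addrC subrK mulVf // lt0r_neq0 // M2_gt0.
Qed.

Definition inA (a : X) : Prop :=
 (forall k, 0 <= l1val a k) /\
 exists (p K : nat) (S : nat -> seq nat),
   (forall k, (K <= k)%N -> l1val a k = 0) /\
   (forall l, p \in S l) /\ (forall l, (size (S l) <= 2 ^ l)%N) /\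
   (forall K', (K <= K')%N -> \sum_(k < K') l1val a k = M /\
      forall l, \sum_(k < K' | nat_of_ord k \notin S l) l1val a k <= M * q ^+ l).

Lemma normA (a : X) : inA a -> `|a| = M.
Proof.
move=> [a0 [p [K [S [hK [_ [_ hs]]]]]]].
rewrite (norm_fin _ K hK); have [<- _] := hs K (leqnn K).
by apply: eq_bigr => k _; rewrite ger0_norm.
Qed.

Definition ebf (i : nat) : nat -> R := fun k => if k == i then M else 0.

Lemma ebP i : l1pred (ebf i).
Proof. by apply: (l1pred_fin (ebf i) i.+1) => k hk; rewrite /ebf gtn_eqF. Qed.

Definition eb i : X := L1 (ebf i) (ebP i).

Lemma sum_ebf i K : (i < K)%N -> \sum_(k < K) ebf i k = M.
Proof.
move=> iK; rewrite (bigD1 (Ordinal iK)) //= /ebf eqxx big1 ?addr0 // => k.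
by rewrite -val_eqE /= => /negbTE ->.
Qed.

Lemma inA_eb i : inA (eb i).
Proof.
split; first by move=> k; rewrite /= /ebf; case: ifP => _ //; exact: ltW.
exists i, i.+1, (fun=> [:: i]); split.
  by move=> k hk; rewrite /= /ebf gtn_eqF.
split; first by move=> l; rewrite mem_seq1.
split; first by move=> l; rewrite /= expn_gt0.
move=> K' hK'; split; first exact: sum_ebf.
move=> l; rewrite big1 ?mulr_ge0 ?exprn_ge0 ?q_ge0 //; first exact: ltW.
by move=> k; rewrite mem_seq1 /= /ebf => /negbTE ->.
Qed.

Lemma dist_eb01 : `|eb 0 - eb 1| = 2 * M.
Proof.
have hv : forall k, l1val (eb 0 - eb 1) k = ebf 0 k - ebf 1 k by [].
rewrite (@norm_fin _ _ 2); last first.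
  by move=> k hk; rewrite hv /ebf !gtn_eqF ?subrr // (leq_trans _ hk).
rewrite !big_ord_recr big_ord0 !hv /ebf /= add0r.
rewrite subr0 sub0r normrN ger0_norm; last exact: ltW.
by rewrite mulr2n mulrDl mul1r.
Qed.

End Geo2.
Arguments q {R}.
Arguments inA {R}.
Arguments ebf {R}.
Arguments ebP {R}.
Arguments eb {R}.
Arguments M2_gt0 {R M}.
Arguments q_ge0 {R M}.
Arguments q_le1 {R M}.
Arguments q_cost {R M}.
Arguments normA {R M}.
Arguments sum_ebf {R M}.
Arguments inA_eb {R M}.
Arguments dist_eb01 {R M}.

Section Geo3.
Variable R : realType.
Local Notation X := (l1 R).
Variables (M : R) (hM : 0 < M).

Lemma sum_cond_mono n (f : 'I_n -> R) (P Q : pred 'I_n) :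
  (forall k, 0 <= f k) -> (forall k, P k -> Q k) ->
  \sum_(k < n | P k) f k <= \sum_(k < n | Q k) f k.
Proof.
move=> f0 PQ; rewrite (big_mkcond P) (big_mkcond Q).
apply: ler_sum => k _; case: ifP => Pk; first by rewrite PQ.
by case: ifP.
Qed.

Lemma sum_cond_le n (f : 'I_n -> R) (P : pred 'I_n) :
  (forall k, 0 <= f k) -> \sum_(k < n | P k) f k <= \sum_(k < n) f k.
Proof.
move=> f0; rewrite (big_mkcond P).
by apply: ler_sum => k _; case: ifP.
Qed.

Lemma sum_ebf_out i n (P : pred 'I_n) :
  (forall k : 'I_n, nat_of_ord k = i -> ~~ P k) -> \sum_(k < n | P k) ebf M i k = 0.
Proof.
move=> Pi; apply: big1 => k Pk; rewrite /ebf; case: eqP => // ki.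
by move: (Pi k ki); rewrite Pk.
Qed.

Lemma mixA (x y : X) (t : R) : inA M x -> inA M y -> 0 <= t <= 1 ->
  exists w, inA M w /\ `|(t *: x + (1 - t) *: y) - w| <= 1.
Proof.
move=> [x0 [px [Kx [Sx [hKx [hpx [hSx hsx]]]]]]].
move=> [y0 [py [Ky [Sy [hKy [hpy [hSy hsy]]]]]]] /andP[t0 t1].
set z := t *: x + (1 - t) *: y.
have t1' : 0 <= 1 - t by rewrite subr_ge0.
have hq0 := q_ge0 hM; have hq1 := q_le1 hM.
have hq1' : 0 <= 1 - q M by rewrite subr_ge0.
exists (q M *: z + (1 - q M) *: eb M px).
have hw : forall k, l1val (q M *: z + (1 - q M) *: eb M px) k =
   q M * (t * l1val x k + (1 - t) * l1val y k) + (1 - q M) * ebf M px k by [].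
split; last first.
  have -> : z - (q M *: z + (1 - q M) *: eb M px) = (1 - q M) *: (z - eb M px).
    by rewrite scalerBr scalerBl scale1r opprD addrA scalerBl scale1r.
  rewrite normrZ ger0_norm //.
  apply: le_trans (q_cost hM); apply: ler_wpM2l => //.
  apply: le_trans (ler_normB _ _) _.
  rewrite (normA _ (inA_eb hM px)) mulr2n mulrDl mul1r lerD2r.
  apply: le_trans (ler_normD _ _) _.
  rewrite !normrZ !ger0_norm // (normA _ (conj x0 (ex_intro _ px (ex_intro _ Kx (ex_intro _ Sx (conj hKx (conj hpx (conj hSx hsx))))))))
     (normA _ (conj y0 (ex_intro _ py (ex_intro _ Ky (ex_intro _ Sy (conj hKy (conj hpy (conj hSy hsy)))))))).
  by rewrite -mulrDl subrKC mul1r.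
split.
  move=> k; rewrite hw; apply: addr_ge0; apply: mulr_ge0 => //.
    by apply: addr_ge0; apply: mulr_ge0.
  by rewrite /ebf; case: ifP => _ //; exact: ltW.
exists px, (maxn (maxn Kx Ky) px.+1),
  (fun l => if l is l'.+1 then Sx l' ++ Sy l' else Sx 0%N).
split.
  move=> k; rewrite !geq_max => /andP[/andP[kx ky] kp].
  by rewrite hw hKx // hKy // /ebf gtn_eqF // !mulr0 !addr0 mulr0.
split; first by case=> [|l] //; rewrite mem_cat hpx.
split.
  case=> [|l]; first exact: hSx.
  by rewrite size_cat expnS mul2n -addnn leq_add.
move=> K'; rewrite !geq_max => /andP[/andP[kx ky] kp].
have [sx1 sx2] := hsx K' kx; have [sy1 sy2] := hsy K' ky.
have e1 : forall P : pred 'I_K', \sum_(i < K' | P i) q M * (t * l1val x i + (1 - t) * l1val y i)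
   = q M * (t * \sum_(i < K' | P i) l1val x i + (1 - t) * \sum_(i < K' | P i) l1val y i).
  by move=> P; rewrite !mulr_sumr -big_split mulr_sumr; apply: eq_bigr => i _; rewrite mulrDr.
have e1T : \sum_(i < K') q M * (t * l1val x i + (1 - t) * l1val y i)
   = q M * (t * \sum_(i < K') l1val x i + (1 - t) * \sum_(i < K') l1val y i).
  by rewrite !mulr_sumr -big_split mulr_sumr; apply: eq_bigr => i _; rewrite mulrDr.
have e2 : forall P : pred 'I_K', \sum_(i < K' | P i) (1 - q M) * ebf M px i
   = (1 - q M) * \sum_(i < K' | P i) ebf M px i.
  by move=> P; rewrite mulr_sumr.
have e2T : \sum_(i < K') (1 - q M) * ebf M px i = (1 - q M) * \sum_(i < K') ebf M px i.
  by rewrite mulr_sumr.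
split.
  under eq_bigr do rewrite hw.
  rewrite big_split /= e1T e2T sx1 sy1 sum_ebf //.
  by rewrite -mulrDl subrKC mul1r -mulrDl subrKC mul1r.
move=> l.
under eq_bigr do rewrite hw.
rewrite big_split /= e1 e2.
rewrite sum_ebf_out; last by move=> k kpx; rewrite kpx; case: l => [|l] /=; rewrite negbK ?mem_cat ?hpx.
rewrite mulr0 addr0.
case: l => [|l].
  rewrite expr0 mulr1.
  apply: (@le_trans _ _ (q M * (t * M + (1 - t) * M))).
    apply: ler_wpM2l => //; apply: lerD; apply: ler_wpM2l => //.
      by rewrite -sx1; apply: sum_cond_le.
    by rewrite -sy1; apply: sum_cond_le.
  by rewrite -mulrDl subrKC mul1r ler_piMl // ltW.
apply: (@le_trans _ _ (q M * (t * (M * q M ^+ l) + (1 - t) * (M * q M ^+ l)))).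
  apply: ler_wpM2l => //; apply: lerD; apply: ler_wpM2l => //.
    apply: le_trans (sx2 l); apply: sum_cond_mono => // k.
    by rewrite mem_cat negb_or => /andP[].
  apply: le_trans (sy2 l); apply: sum_cond_mono => // k.
  by rewrite mem_cat negb_or => /andP[].
by rewrite -mulrDl subrKC mul1r exprS mulrCA.
Qed.

End Geo3.
Arguments mixA {R M}.

Section Geo4.
Variable R : realType.
Local Notation X := (l1 R).
Variables (M : R) (hM : 0 < M).

Definition cN (N : nat) : X := \sum_(i < N) (N%:R^-1) *: eb M i.

Lemma cN_val N k : l1val (cN N) k = if (k < N)%N then N%:R^-1 * M else 0.
Proof.
rewrite /cN l1val_sum.
under eq_bigr do rewrite l1valZ.
case: ltnP => kN.
  rewrite (bigD1 (Ordinal kN)) //= /ebf eqxx big1 ?addr0 // => i.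
  by rewrite -val_eqE /= eq_sym => /negbTE ->; rewrite mulr0.
by apply: big1 => i _; rewrite /= /ebf; case: eqP => [ki|]; [move: kN; rewrite ki leqNgt ltn_ord | rewrite mulr0].
Qed.

Lemma sum_in_seq n (f : nat -> R) (b : R) (s : seq nat) :
  (forall k, 0 <= f k <= b) ->
  \sum_(k < n | nat_of_ord k \in s) f k <= (size s)%:R * b.
Proof.
move=> fb; elim: s => [|j s IH].
  by rewrite big1 ?mul0r.
rewrite /= -addn1 natrD mulrDl mul1r addrC.
apply: (@le_trans _ _ (\sum_(k < n | nat_of_ord k == j) f k + \sum_(k < n | nat_of_ord k \in s) f k)).
  rewrite (big_mkcond (fun k : 'I_n => nat_of_ord k \in j :: s)).
  rewrite (big_mkcond (fun k : 'I_n => nat_of_ord k == j)).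
  rewrite (big_mkcond (fun k : 'I_n => nat_of_ord k \in s)) -big_split.
  apply: ler_sum => k _; rewrite in_cons.
  have [f0 _] := andP (fb k).
  case: eqP => _ /=; case: ifP => _ //; rewrite ?addr0 ?add0r ?lerDl //.
apply: lerD => //.
have [jn|nj] := ltnP j n.
  rewrite (bigD1 (Ordinal jn)) //= big1 ?addr0; first by have /andP[] := fb j.
  by move=> k /andP[/eqP kj]; rewrite -val_eqE /= kj eqxx.
rewrite big1; last by move=> k /eqP kj; move: (ltn_ord k); rewrite kj ltnNge nj.
by have /andP[f0 _] := fb 0%N; apply: le_trans f0 _; apply: le_trans (proj2 (andP (fb 0%N))).
Qed.

Lemma sum_cN N K' : (0 < N)%N -> (N <= K')%N -> \sum_(k < K') l1val (cN N) k = M.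
Proof.
move=> N0 NK; rewrite (@sum_zero_widen _ (fun k => l1val (cN N) k) N K') //; last first.
  by move=> k kN; rewrite cN_val ltnNge kN.
under eq_bigr do rewrite cN_val ltn_ord.
rewrite sumr_const card_ord.
have -> : N%:R^-1 * M *+ N = (N%:R * N%:R^-1) * M by rewrite -mulr_natl mulrA.
rewrite mulfV ?mul1r //.
by rewrite pnatr_eq0 -lt0n.
Qed.

Lemma cN_far N a l : (0 < N)%N -> inA M a ->
  2 * M - 2 * (M * q M ^+ l + (2 ^ l)%:R * (N%:R^-1 * M)) <= `|cN N - a|.
Proof.
move=> N0 [a0 [p [K [S [hK [_ [hS hs]]]]]]].
set K' := maxn K N.
have [s1 s2] := hs K' (leq_maxl K N).
have c0 : forall k, 0 <= l1val (cN N) k <= N%:R^-1 * M.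
  move=> k; rewrite cN_val.
  have h : 0 <= N%:R^-1 * M by rewrite mulr_ge0 // ?invr_ge0 ?ler0n // ltW.
  by case: ifP => _; rewrite ?lexx ?h.
apply: le_trans (psum_le_norm (cN N - a) K').
pose g (k : nat) := if k \in S l then l1val (cN N) k else l1val a k.
have pw : forall k : 'I_K', l1val (cN N) k + l1val a k - 2 * g k <= `|l1val (cN N - a) k|.
  move=> k; rewrite l1valB /g; case: ifP => _.
    have -> : l1val (cN N) k + l1val a k - 2 * l1val (cN N) k = - (l1val (cN N) k - l1val a k) by ring.
    rewrite -normrN; exact: ler_norm.
  have -> : l1val (cN N) k + l1val a k - 2 * l1val a k = l1val (cN N) k - l1val a k by ring.
  exact: ler_norm.
apply: le_trans (ler_sum _ (fun k _ => pw k)).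
rewrite sumrB big_split /= -mulr_sumr s1 sum_cN ?leq_maxr //.
rewrite (bigID (fun k : 'I_K' => nat_of_ord k \in S l)) /=.
have hA : \sum_(k < K' | nat_of_ord k \in S l) g k <= (2 ^ l)%:R * (N%:R^-1 * M).
  apply: (@le_trans _ _ ((size (S l))%:R * (N%:R^-1 * M))).
    rewrite (eq_bigr (fun k : 'I_K' => l1val (cN N) k)); last by move=> k; rewrite /g => ->.
    exact: sum_in_seq.
  apply: ler_wpM2r; first by have /andP[+ _] := c0 0%N; move/le_trans; apply; have /andP[] := c0 0%N.
  by rewrite ler_nat.
have hB : \sum_(k < K' | nat_of_ord k \notin S l) g k <= M * q M ^+ l.
  rewrite (eq_bigr (fun k : 'I_K' => l1val a k)); last by move=> k /negbTE; rewrite /g => ->.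
  exact: s2.
lra.
Qed.

End Geo4.
Arguments cN {R}.
Arguments cN_far {R M}.

Section Geo5.
Variable R : realType.
Local Notation X := (l1 R).
Variables (M : R) (hM : 0 < M).

Lemma cN_conv N : (0 < N)%N -> conv_hull (inA M) (cN M N).
Proof.
move=> N0; exists N, (fun=> N%:R^-1), (fun i => eb M i); split.
  by move=> i; rewrite invr_ge0 ler0n.
split.
  rewrite sumr_const card_ord.
  have -> : N%:R^-1 *+ N = N%:R * N%:R^-1 :> R by rewrite mulr_natl.
  rewrite mulfV //.
  by rewrite pnatr_eq0 -lt0n.
split; last by [].
move=> i; exact: inA_eb.
Qed.

Lemma conv_norm c : conv_hull (inA M) c -> `|c| <= M.
Proof.
move=> [n [l [a [l0 [l1 [aA ->]]]]]].
apply: le_trans (ler_norm_sum _ _ _) _.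
under eq_bigr do rewrite normrZ (normA _ (aA _)) ger0_norm //.
by rewrite -mulr_suml l1 mul1r.
Qed.

Lemma A_conv a : inA M a -> conv_hull (inA M) a.
Proof.
move=> ha; exists 1%N, (fun=> 1), (fun=> a); split => //.
split; first by rewrite big_ord1.
by split => //; rewrite big_ord1 scale1r.
Qed.

Lemma q_lt1 : q M < 1.
Proof.
rewrite /q; case: ifP => _; first exact: ltr01.
by rewrite ltrBlDr ltrDl invr_gt0 M2_gt0.
Qed.

Lemma choose_lN (e : R) : 0 < e -> exists l N, (0 < N)%N /\ 2 * (M * q M ^+ l + (2 ^ l)%:R * (N%:R^-1 * M)) <= e.
Proof.
move=> e0.
have d0 : 0 < e / (4 * M) by rewrite divr_gt0 // mulr_gt0.
have hq : `|q M| < 1 by rewrite ger0_norm ?(q_ge0 hM) // q_lt1.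
have /cvgrPdist_lt /(_ _ d0) := cvg_expr hq.
case=> n0 _ /(_ n0 (leqnn n0)); rewrite sub0r normrN ger0_norm ?exprn_ge0 ?(q_ge0 hM) // => hl.
set a : R := (2 ^ n0)%:R.
have a0 : 0 < a by rewrite ltr0n expn_gt0.
exists n0, (Num.Def.trunc (4 * a * M / e)).+1; split => //.
have hN := truncnS_gt (4 * a * M / e).
set N := (Num.Def.trunc _).+1 in hN *.
have N0 : 0 < N%:R :> R by rewrite ltr0n.
have h1 : M * q M ^+ n0 <= e / 4.
  have h := hl; rewrite -(ltr_pM2l hM) in h.
  have -> : e / 4 = M * (e / (4 * M)) by field; rewrite lt0r_neq0.
  exact: ltW.
have h2 : a * (N%:R^-1 * M) <= e / 4.
  have hN' : 4 * a * M < N%:R * e.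
    by move: hN; rewrite ltr_pdivrMr // mulrC.
  have -> : a * (N%:R^-1 * M) = (4 * a * M) / (4 * N%:R) by field; rewrite lt0r_neq0.
  rewrite ler_pdivrMr ?mulr_gt0 //.
  have -> : e / 4 * (4 * N%:R) = N%:R * e by field.
  exact: ltW.
lra.
Qed.

End Geo5.
Arguments cN_conv {R M}.
Arguments conv_norm {R M}.
Arguments A_conv {R M}.
Arguments choose_lN {R M}.

Theorem theorem7p1 (R : realType) (M : R) (hM : 0 < M) :
  exists (X : completeNormedModType R),
    iso_to_l1 X /\
    exists A : set X,
      A `<=` @ballM R X M /\ approx_convex A /\
      hausdorff A (conv_hull A) = (2 * M)%:E /\ diam A = (2 * M)%:E.
Proof.
exists (l1 R); split.
  exists l1val; split; first by [].
  split; first by [].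
  split.
    exists 1, 1; split => //; split => // x.
    by rewrite l1normE -normX !mul1r lexx.
  by move=> u hu; exists (L1 u hu).
exists (inA M); split.
  by move=> a ha; rewrite /ballM /= (normA _ ha).
split.
  move=> x y t hx hy ht.
  have [w [hw hzw]] := mixA hM x y t hx hy ht.
  apply: ge_ereal_inf; exists (`|t *: x + (1 - t) *: y - w|)%:E.
    by exists w.
  by rewrite lee_fin.
split.
  rewrite /hausdorff.
  have HA : (ereal_sup [set dist_set a (conv_hull (inA M)) | a in inA M] <= (2*M)%:E)%E.
    apply: ge_ereal_sup => _ [a ha <-].
    apply: (@le_trans _ _ (`|a - a|)%:E).
      apply: ge_ereal_inf; exists (`|a - a|)%:E => //; exists a => //; exact: A_conv.
    by rewrite subrr normr0 lee_fin mulr_ge0 // ltW.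
  have HB : ereal_sup [set dist_set b (inA M) | b in conv_hull (inA M)] = (2*M)%:E.
    apply/le_anti/andP; split.
      apply: ge_ereal_sup => _ [b hb <-].
      apply: (@le_trans _ _ (`|b - eb M 0|)%:E).
        apply: ge_ereal_inf; exists (`|b - eb M 0|)%:E => //; exists (eb M 0) => //.
        exact: inA_eb.
      rewrite lee_fin; apply: le_trans (ler_normB _ _) _.
      by rewrite (normA _ (inA_eb hM 0)) mulr2n mulrDl mul1r lerD2r (conv_norm _ hb).
    apply/lee_addgt0Pr => e e0.
    have [l [N [N0 hlN]]] := choose_lN hM e e0.
    rewrite -leeBlDr //.
    apply: le_ereal_sup_tmp; exists (dist_set (cN M N) (inA M)).
      by exists (cN M N) => //; exact: cN_conv.
    apply: le_ereal_inf_tmp => _ [a ha <-].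
    rewrite -EFinB lee_fin; apply: le_trans (cN_far hM N a l N0 ha).
    lra.
  by rewrite HB max_r.
apply/le_anti/andP; split.
  apply: ge_ereal_sup => _ [x hx [y hy <-]].
  rewrite lee_fin; apply: le_trans (ler_normB _ _) _.
  by rewrite (normA _ hx) (normA _ hy) mulr2n mulrDl mul1r.
apply: le_ereal_sup_tmp; exists (`|eb M 0 - eb M 1|)%:E.
  by exists (eb M 0); [exact: inA_eb|exists (eb M 1); [exact: inA_eb|]].
by rewrite dist_eb01.
Qed.
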